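(* Every prime reciprocal Puiseux monoid satisfies the ascending chain condition on principal ideals (ACCP).
   Context: A Puiseux monoid is an additive submonoid of $(\mathbb{Q}_{\ge 0},+)$. For $q\in\mathbb{Q}_{>0}$, $\mathsf{d}(q)$ denotes the denominator of $q$ in lowest terms. A Puiseux monoid $M$ is prime reciprocal if there exist an infinite set $P$ of prime numbers and a set $S\subseteq\mathbb{Q}_{>0}$ whose elements have pairwise distinct denominators such that $M$ is generated by $S$ as a monoid and $\{\mathsf{d}(s)\mid s\in S\}=P$. A principal ideal of a (commutative, cancellative) monoid $M$ is a set $x+M$ with $x\in M$; $M$ satisfies ACCP if every ascending chain $x_1+M\subseteq x_2+M\subseteq\cdots$ of principal ideals eventually stabilizes. *)

(* Defs.v *)
From HB Require Import structures.
From mathcomp Require Import all_boot all_order all_algebra.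
Set Implicit Arguments. Unset Strict Implicit. Unset Printing Implicit Defensive.
Import Order.TTheory GRing.Theory Num.Theory.
Local Open Scope ring_scope.

Definition puiseux_monoid (M : rat -> Prop) : Prop :=
  [/\ M 0, (forall x y, M x -> M y -> M (x + y)) & (forall x, M x -> 0 <= x)].

Definition dnm (q : rat) : nat := absz (denq q).

Definition generated_by (M S : rat -> Prop) : Prop :=
  forall x, M x <-> exists s : seq rat,
      (forall a, a \in s -> S a) /\ x = \sum_(a <- s) a.

Definition prime_reciprocal (M : rat -> Prop) : Prop :=
  exists (P : nat -> Prop) (S : rat -> Prop),
    (forall p, P p -> prime p) /\
    (forall n : nat, exists p, (n < p)%N /\ P p) /\            (* P infinite *)
    (forall s, S s -> 0 < s) /\
    (forall s t, S s -> S t -> dnm s = dnm t -> s = t) /\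
    generated_by M S /\
    (forall p, P p <-> exists2 s, S s & dnm s = p).

Definition pideal (M : rat -> Prop) (x : rat) : rat -> Prop :=
  fun y => exists2 m, M m & y = x + m.

Definition ACCP (M : rat -> Prop) : Prop :=
  forall x : nat -> rat,
    (forall n, M (x n)) ->
    (forall n y, pideal M (x n) y -> pideal M (x n.+1) y) ->
    exists N, forall n, (N <= n)%N -> forall y, pideal M (x n) y <-> pideal M (x N) y.

(* Main.v *)
Require Import Defs.
From mathcomp Require Import all_boot all_order all_algebra ring lra.
Import GRing.Theory Num.Theory Order.TTheory.
Open Scope ring_scope.
Set Implicit Arguments. Unset Strict Implicit.

Definition pint (p : nat) (x : rat) :=
  exists (u : int) (v : nat), ~~ (p %| v)%N /\ x = u%:~R / v%:R.

Lemma v_neq0 p v : prime p -> ~~ (p %| v)%N -> (v%:R : rat) != 0.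
Proof. by move=> _ h; rewrite pnatr_eq0; apply: contraNneq h => ->; rewrite dvdn0. Qed.

Lemma pint0 p : prime p -> pint p 0.
Proof.
move=> pp; exists 0, 1%N; split; last by rewrite mul0r.
by rewrite dvdn1; apply: contraTneq pp => ->.
Qed.

Lemma pintD p x y : prime p -> pint p x -> pint p y -> pint p (x + y).
Proof.
move=> pp [u1 [v1 [h1 ->]]] [u2 [v2 [h2 ->]]].
exists (u1 * v2%:Z + u2 * v1%:Z), (v1 * v2)%N; split.
  by rewrite Euclid_dvdM // negb_or h1 h2.
have n1 := v_neq0 pp h1; have n2 := v_neq0 pp h2.
rewrite natrM intrD !intrM /=.
have -> : ((v1%:Z)%:~R : rat) = v1%:R by [].
have -> : ((v2%:Z)%:~R : rat) = v2%:R by [].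
by field; rewrite n1 n2.
Qed.

Lemma pintN p x : pint p x -> pint p (- x).
Proof. by move=> [u [v [h ->]]]; exists (- u), v; split => //; rewrite intrN mulNr. Qed.

Lemma pintB p x y : prime p -> pint p x -> pint p y -> pint p (x - y).
Proof. by move=> pp hx hy; apply: pintD => //; apply: pintN. Qed.

Lemma pint_sum p (s : seq rat) (P : pred rat) : prime p ->
  (forall b, b \in s -> P b -> pint p b) -> pint p (\sum_(b <- s | P b) b).
Proof.
move=> pp; elim: s => [|b s IH] h; first by rewrite big_nil; apply: pint0.
rewrite big_cons; case: ifP => Pb.
  by apply: pintD => //; [apply: h; rewrite ?mem_head | apply: IH => c cs; apply: h; rewrite inE cs orbT].
by apply: IH => c cs; apply: h; rewrite inE cs orbT.
Qed.

Lemma denq_dnm b : denq b = (dnm b)%:Z.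
Proof. by rewrite /dnm; case: (denq b) (denq_gt0 b). Qed.

Lemma pint_other p b : prime p -> prime (dnm b) -> dnm b != p -> pint p b.
Proof.
move=> pp pb ne; exists (numq b), (dnm b); split.
  by rewrite dvdn_prime2 // eq_sym.
by rewrite -[LHS]divq_num_den denq_dnm.
Qed.

Lemma key p a k : prime p -> dnm a = p -> pint p (k%:R * a) -> (p %| k)%N.
Proof.
move=> pp da [u [v [hv E]]].
have nv := v_neq0 pp hv.
have np : (p%:R : rat) != 0 by rewrite pnatr_eq0; apply: contraTneq pp => ->.
have ea : a = (numq a)%:~R / p%:R by rewrite -[LHS]divq_num_den denq_dnm da.
have E2 : ((k%:Z * numq a * v%:Z)%:~R : rat) = (u * p%:Z)%:~R.
  rewrite !intrM /=.
  have -> : ((v%:Z)%:~R : rat) = v%:R by [].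
  have -> : ((p%:Z)%:~R : rat) = p%:R by [].
  have -> : ((k%:Z)%:~R : rat) = k%:R by [].
  rewrite {1}ea in E.
  have C := congr1 (fun t => t * v%:R * p%:R) E; move: C => /=.
  have -> : k%:R * ((numq a)%:~R / p%:R) * v%:R * p%:R = (k%:R * (numq a)%:~R * v%:R : rat) by field.
  have -> : u%:~R / v%:R * v%:R * p%:R = (u%:~R * p%:R : rat) by field.
  done.
have E4 := intr_inj E2.
have : (p %| absz (k%:Z * numq a * v%:Z)%R)%N by rewrite E4 abszM /= dvdn_mull.
rewrite !abszM /= !Euclid_dvdM // (negbTE hv) orbF => /orP[//|hn].
have := coprime_num_den a; rewrite -/(dnm a) da /coprime => /eqP hg.
have : (p %| gcdn `|numq a| p)%N by rewrite dvdn_gcd hn dvdnn.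
by rewrite hg dvdn1 => /eqP p1; move: pp; rewrite p1.
Qed.

Lemma big_ext_U (R : Type) (idx : R) (op : Monoid.com_law idx) (T : eqType)
  (s U : seq T) (g : T -> nat -> R) :
  uniq U -> {subset s <= U} -> (forall a, g a 0%N = idx) ->
  \big[op/idx]_(a <- undup s) g a (count_mem a s) =
  \big[op/idx]_(a <- U) g a (count_mem a s).
Proof.
move=> uU sU g0.
rewrite [RHS](bigID (fun a => a \in s)) /=.
rewrite [X in op _ X]big1 ?Monoid.mulm1; last first.
  by move=> a /count_memPn ->.
rewrite -[RHS]big_filter; apply: perm_big.
apply: uniq_perm; [exact: undup_uniq | exact: filter_uniq|].
by move=> a; rewrite mem_undup mem_filter; case: (boolP (a \in s)) => // /sU ->.
Qed.

Lemma sum_count_rat (s : seq rat) :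
  \sum_(a <- s) a = \sum_(a <- undup s) (count_mem a s)%:R * a.
Proof.
rewrite -big_undup_iterop_count; apply: eq_bigr => a _.
rewrite Monoid.iteropE mulr_natl.
by elim: (count_mem a s) => //= n IH; rewrite IH mulrS.
Qed.

Lemma sum_eq_termwise (T : eqType) (U : seq T) (f g : T -> rat) :
  (forall i, i \in U -> f i <= g i) -> \sum_(i <- U) f i = \sum_(i <- U) g i ->
  forall i, i \in U -> f i = g i.
Proof.
elim: U => [|b U IH] //= le eqs i; rewrite !big_cons in eqs.
have h1 : f b <= g b by apply: le; rewrite mem_head.
have h2 : \sum_(j <- U) f j <= \sum_(j <- U) g j.
  rewrite big_seq [X in _ <= X]big_seq; apply: ler_sum => j jU.
  by apply: le; rewrite inE jU orbT.
have e1 : f b = g b by lra.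
rewrite inE => /orP[/eqP -> //|iU]; apply: IH => //.
  by move=> j jU; apply: le; rewrite inE jU orbT.
lra.
Qed.

Lemma split_sum (s : seq rat) a :
  \sum_(b <- s) b = (count_mem a s)%:R * a + \sum_(b <- s | b != a) b.
Proof.
rewrite (bigID (fun b => b == a)) /=; congr (_ + _).
rewrite (eq_bigr (fun => a)); last by move=> b /eqP.
rewrite big_const_seq mulr_natl.
have -> : count (fun b => b == a) s = count_mem a s.
  by apply: eq_count => b; rewrite eq_sym.
by elim: (count_mem a s) => //= n ->; rewrite mulrS.
Qed.

Lemma inv_mod (S : rat -> Prop)
  (hpr : forall a, S a -> prime (dnm a))
  (hinj : forall s t, S s -> S t -> dnm s = dnm t -> s = t)
  (s t : seq rat) a :
  (forall b, b \in s -> S b) -> (forall b, b \in t -> S b) -> S a ->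
  \sum_(b <- s) b = \sum_(b <- t) b ->
  (count_mem a s %% dnm a = count_mem a t %% dnm a)%N.
Proof.
move=> hs ht Sa.
have pp := hpr a Sa.
have rest : forall r : seq rat, (forall b, b \in r -> S b) ->
    pint (dnm a) (\sum_(b <- r | b != a) b).
  move=> r hr; apply: pint_sum => // b br nba; apply: pint_other => //.
    exact: hpr (hr b br).
  by apply: contra nba => /eqP e; apply/eqP; apply: hinj => //; apply: hr.
wlog le : s t hs ht / (count_mem a t <= count_mem a s)%N.
  move=> W E; case: (leqP (count_mem a t) (count_mem a s)) => h; first exact: W.
  by symmetry; apply: W => //; apply: ltnW.
move=> E; apply/eqP; rewrite eqn_mod_dvd //.
apply: (key pp (erefl _)).
have -> : (count_mem a s - count_mem a t)%:R * a =
   \sum_(b <- t | b != a) b - \sum_(b <- s | b != a) b.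
  move: E; rewrite (split_sum s a) (split_sum t a) natrB // => E.
  rewrite mulrBl; lra.
by apply: pintB => //; apply: rest.
Qed.

Definition Fv (s : seq rat) : rat :=
  \sum_(a <- undup s) ((count_mem a s %% dnm a)%N%:R * a).
Definition Rn (s : seq rat) : nat :=
  (\sum_(a <- undup s) (count_mem a s %% dnm a))%N.
Definition Nn (s : seq rat) : nat :=
  (\sum_(a <- undup s) (count_mem a s %/ dnm a * absz (numq a)))%N.

Lemma decomp (s : seq rat) : (forall b, b \in s -> 0 < b) ->
  \sum_(b <- s) b = (Nn s)%:R + Fv s.
Proof.
move=> hpos; rewrite sum_count_rat /Nn /Fv natr_sum -big_split /=.
rewrite big_seq [RHS]big_seq; apply: eq_bigr => a; rewrite mem_undup => /hpos a0.
have [m hm] : exists m : nat, numq a = m%:Z.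
  move: a0; rewrite -numq_gt0; case: (numq a) => [m|m] // _; by exists m.
have ea : (dnm a)%:R * a = m%:R.
  have e0 := divq_num_den a; rewrite hm denq_dnm in e0.
  rewrite -{2}e0.
  have -> : ((m%:Z)%:~R : rat) = m%:R by [].
  have -> : (((dnm a)%:Z)%:~R : rat) = (dnm a)%:R by [].
  have : ((dnm a)%:R : rat) != 0 by rewrite pnatr_eq0 /dnm absz_eq0 denq_neq0.
  move=> h; field; exact: h.
by rewrite hm /= {1}(divn_eq (count_mem a s) (dnm a)) natrD mulrDl natrM -mulrA ea natrM.
Qed.

Lemma Rn0 (s : seq rat) : Rn s = 0%N -> Fv s = 0.
Proof.
rewrite /Rn /Fv; elim: (undup s) => [|b r IH]; rewrite ?big_nil ?big_cons //.
by move/eqP; rewrite addn_eq0 => /andP[/eqP -> /eqP/IH ->]; rewrite mul0r addr0.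
Qed.

Lemma chain_step (S : rat -> Prop)
  (hpr : forall a, S a -> prime (dnm a))
  (hinj : forall s t, S s -> S t -> dnm s = dnm t -> s = t)
  (hpos : forall a, S a -> 0 < a)
  (s s' u : seq rat) :
  (forall b, b \in s -> S b) -> (forall b, b \in s' -> S b) ->
  (forall b, b \in u -> S b) ->
  \sum_(b <- s) b = \sum_(b <- s') b + \sum_(b <- u) b ->
  (Nn s' + Nn u <= Nn s)%N /\
  (Nn s = Nn s' -> Nn u = 0%N /\ (Rn s' + Rn u <= Rn s)%N).
Proof.
move=> hs hs' hu E.
set U := undup (s ++ s' ++ u).
have uU : uniq U by apply: undup_uniq.
have sub : forall r : seq rat, (forall b, b \in r -> b \in s ++ s' ++ u) -> (forall b, b \in r -> b \in U).
  by move=> r h b /h; rewrite mem_undup.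
have SU : forall a, a \in U -> S a.
  move=> a; rewrite mem_undup !mem_cat => /or3P[/hs|/hs'|/hu] //.
have FvU : forall r : seq rat, (forall b, b \in r -> b \in s ++ s' ++ u) ->
    Fv r = \sum_(a <- U) ((count_mem a r %% dnm a)%N%:R * a).
  move=> r hr; rewrite /Fv (@big_ext_U _ _ _ _ r U (fun a n => (n %% dnm a)%N%:R * a)) //.
    exact: sub.
  by move=> a; rewrite mod0n mul0r.
have RnU : forall r : seq rat, (forall b, b \in r -> b \in s ++ s' ++ u) ->
    Rn r = (\sum_(a <- U) (count_mem a r %% dnm a))%N.
  move=> r hr; rewrite /Rn (@big_ext_U _ _ _ _ r U (fun a n => (n %% dnm a)%N)) //.
    exact: sub.
  by move=> a; rewrite mod0n.
have ss : forall b, b \in s -> b \in s ++ s' ++ u by move=> b; rewrite mem_cat => ->.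
have ss' : forall b, b \in s' -> b \in s ++ s' ++ u by move=> b; rewrite !mem_cat => ->; rewrite orbT.
have su : forall b, b \in u -> b \in s ++ s' ++ u by move=> b; rewrite !mem_cat => ->; rewrite !orbT.
pose al a := ((count_mem a s' + count_mem a u) %% dnm a)%N.
pose be a := (count_mem a s' %% dnm a + count_mem a u %% dnm a)%N.
have cs : forall a, a \in U -> (count_mem a s %% dnm a)%N = al a.
  move=> a aU; rewrite /al -count_cat; apply: (inv_mod hpr hinj) => //.
  - by move=> b; rewrite mem_cat => /orP[/hs'|/hu].
  - exact: SU.
  - by rewrite big_cat.
have albe : forall a, (al a <= be a)%N.
  by move=> a; rewrite /al /be -modnDm leq_mod.
have F1 : Fv s = \sum_(a <- U) ((al a)%:R * a).
  rewrite (FvU _ ss) big_seq [RHS]big_seq; apply: eq_bigr => a aU; by rewrite cs.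
have F2 : Fv s' + Fv u = \sum_(a <- U) ((be a)%:R * a).
  rewrite (FvU _ ss') (FvU _ su) -big_split; apply: eq_bigr => a _.
  by rewrite /be natrD mulrDl.
have Fle : Fv s <= Fv s' + Fv u.
  rewrite F1 F2 big_seq [X in _ <= X]big_seq; apply: ler_sum => a aU.
  by apply: ler_wpM2r; [apply/ltW/hpos/SU | rewrite ler_nat].
have Sp : forall r : seq rat, (forall b, b \in r -> S b) -> forall b, b \in r -> 0 < b.
  by move=> r hr b /hr /hpos.
have D := decomp (Sp _ hs); have D' := decomp (Sp _ hs'); have Du := decomp (Sp _ hu).
have Fge : forall r : seq rat, (forall b, b \in r -> S b) -> 0 <= Fv r.
  move=> r hr; rewrite /Fv big_seq; apply: sumr_ge0 => a ar.
  by apply: mulr_ge0 => //; apply/ltW/hpos/hr; rewrite mem_undup in ar.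
have Fs := Fge _ hs; have Fs' := Fge _ hs'; have Fu := Fge _ hu.
have key1 : (Nn s' + Nn u)%:R <= (Nn s)%:R :> rat.
  rewrite natrD; move: E; rewrite D D' Du; lra.
split; first by rewrite ler_nat in key1.
move=> eN.
have key2 : (Nn u)%:R + ((Fv s' + Fv u) - Fv s) = 0 :> rat.
  move: E; rewrite D D' Du eN; lra.
have hNu : (Nn u)%:R = 0 :> rat by have := ler0n rat (Nn u); lra.
split; first by apply/eqP; rewrite -(eqr_nat rat) hNu.
have eF : Fv s = Fv s' + Fv u by lra.
have hle : forall a, a \in U -> (al a)%:R * a <= (be a)%:R * a.
  move=> a aU; apply: ler_wpM2r; [apply/ltW/hpos/SU | rewrite ler_nat] => //.
have eT := sum_eq_termwise hle.
have eab : forall a, a \in U -> al a = be a.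
  move=> a aU; have := eT; rewrite -F1 -F2 eF => /(_ erefl a aU) h.
  have a0 : a != 0 by rewrite gt_eqF //; apply/hpos/SU.
  by apply/eqP; rewrite -(eqr_nat rat); apply/eqP; apply: (mulIf a0 h).
rewrite (RnU _ ss) (RnU _ ss') (RnU _ su) -big_split /= big_seq [X in (_ <= X)%N]big_seq.
apply: leq_sum => a aU; rewrite cs // eab //.
Qed.

From Stdlib Require Import Classical_Prop IndefiniteDescription.

Lemma mono_nat (f : nat -> nat) : (forall n, (f n.+1 <= f n)%N) ->
  forall m n, (m <= n)%N -> (f n <= f m)%N.
Proof.
move=> h m n /subnK <-; elim: (n - m)%N => [|k IH] //.
by rewrite addSn; apply: leq_trans (h _) IH.
Qed.

Lemma ev_const (f : nat -> nat) : (forall n, (f n.+1 <= f n)%N) ->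
  exists N, forall n, (N <= n)%N -> f n = f N.
Proof.
move=> h; have : (f 0 <= f 0)%N by [].
move: {2}(f 0) => k; elim: k f h => [|k IH] f h hk.
  exists 0%N => n _; have h0 : f 0%N = 0%N by apply/eqP; rewrite -leqn0.
  have := leq_trans (mono_nat h (leq0n n)) hk; rewrite leqn0 h0 => /eqP //.
case: (classic (exists n, (f n < f 0)%N)) => [[n0 hn0]|nex].
  have hg : forall i, (f (n0 + i.+1) <= f (n0 + i))%N by move=> i; rewrite addnS; apply: h.
  have hg0 : (f (n0 + 0) <= k)%N by rewrite addn0 -ltnS; apply: leq_trans hn0 hk.
  have [N hN] := IH (fun i => f (n0 + i)%N) hg hg0.
  exists (n0 + N)%N => n hn; rewrite -(subnKC hn) -addnA hN //; last by rewrite leq_addr.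
exists 0%N => n _; apply/eqP; rewrite eqn_leq (mono_nat h (leq0n n)) /=.
by rewrite leqNgt; apply/negP => lt; apply: nex; exists n.
Qed.

Theorem mainTheorem5 (M : rat -> Prop) :
  puiseux_monoid M -> prime_reciprocal M -> ACCP M.
Proof.
move=> [M0 Madd Mge] [P [S [hP [hPinf [hpos [hinj [hgen hPS]]]]]]] x hxM hch.
have hpr : forall a, S a -> prime (dnm a).
  by move=> a Sa; apply: hP; apply/hPS; exists a.
have ex_s : forall n, exists s : seq rat, (forall b, b \in s -> S b) /\ x n = \sum_(b <- s) b.
  by move=> n; apply/hgen.
have ex_u : forall n, exists u : seq rat, (forall b, b \in u -> S b) /\
    x n = x n.+1 + \sum_(b <- u) b.
  move=> n; have [|m Mm e] := hch n (x n); first by exists 0; rewrite ?addr0.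
  have [u [hu eu]] := (hgen m).1 Mm; exists u; split => //; by rewrite -eu.
pose sn n := proj1_sig (constructive_indefinite_description _ (ex_s n)).
pose un n := proj1_sig (constructive_indefinite_description _ (ex_u n)).
have Hs : forall n, (forall b, b \in sn n -> S b) /\ x n = \sum_(b <- sn n) b.
  by move=> n; exact: proj2_sig (constructive_indefinite_description _ (ex_s n)).
have Hu : forall n, (forall b, b \in un n -> S b) /\ x n = x n.+1 + \sum_(b <- un n) b.
  by move=> n; exact: proj2_sig (constructive_indefinite_description _ (ex_u n)).
have CS : forall n, (Nn (sn n.+1) + Nn (un n) <= Nn (sn n))%N /\
   (Nn (sn n) = Nn (sn n.+1) -> Nn (un n) = 0%N /\ (Rn (sn n.+1) + Rn (un n) <= Rn (sn n))%N).
  move=> n; apply: (chain_step hpr hinj hpos).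
  - exact: (Hs n).1.
  - exact: (Hs n.+1).1.
  - exact: (Hu n).1.
  - by rewrite -(Hs n).2 -(Hs n.+1).2 (Hu n).2.
have [N0 hN0] := ev_const (f := fun n => Nn (sn n))
  (fun n => leq_trans (leq_addr _ _) (CS n).1).
have hB : forall n, (Rn (sn (N0 + n).+1) <= Rn (sn (N0 + n)))%N.
  move=> n; have [_ h] := CS (N0 + n)%N.
  have [_ h2] := h (etrans (hN0 _ (leq_addr _ _)) (esym (hN0 _ (leqW (leq_addr _ _))))).
  exact: leq_trans (leq_addr _ _) h2.
have hB' : forall n, (Rn (sn (N0 + n.+1)) <= Rn (sn (N0 + n)))%N.
  by move=> n; rewrite addnS; exact: hB n.
have [N1 hN1] := ev_const (f := fun n => Rn (sn (N0 + n))) hB'.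
have stab : forall n, (N0 + N1 <= n)%N -> x n = x n.+1.
  move=> n hn.
  have [k en] : exists k, n = (N0 + k)%N by exists (n - N0)%N; rewrite subnKC // (leq_trans (leq_addr _ _) hn).
  rewrite en in hn *.
  have hk : (N1 <= k)%N by move: hn; rewrite leq_add2l.
  have [_ h] := CS (N0 + k)%N.
  have [hNu h2] := h (etrans (hN0 _ (leq_addr _ _)) (esym (hN0 _ (leqW (leq_addr _ _))))).
  have e1 : Rn (sn (N0 + k)%N) = Rn (sn (N0 + N1)%N) by exact: hN1 k hk.
  have e2 : Rn (sn (N0 + k).+1) = Rn (sn (N0 + N1)%N) by rewrite -addnS; exact: hN1 k.+1 (leqW hk).
  have hRu : Rn (un (N0 + k)) = 0%N.
    by move: h2; rewrite e1 e2 -{2}[Rn _]addn0 leq_add2l leqn0 => /eqP.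
  rewrite (Hu (N0 + k)%N).2 (decomp (fun b hb => hpos b ((Hu _).1 b hb))) hNu (Rn0 hRu).
  by rewrite /= !addr0.
exists (N0 + N1)%N => n hn.
have -> : x n = x (N0 + N1)%N.
  elim: n hn => [|n IH] hn.
    by move: hn; rewrite leqn0 => /eqP ->.
  case: (leqP (N0 + N1) n) => h.
    by rewrite -stab // IH.
  by have -> : n.+1 = (N0 + N1)%N by apply/eqP; rewrite eqn_leq hn h.
by [].
Qed.
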